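(* Let $q>0$, $\kappa>0$, $\sigma>0$, $\mu\in\mathbb{R}$, $\theta\in\mathbb{R}$, and let $\psi_X$, $\rho$, $\hat\rho$, $\zeta$, $\hat\zeta$, $d$ be as in the context. Consider the equation $$\psi_X(z)=q,\qquad z\in\mathbb{C}. \tag{$*$}$$ Then: (i) $( * )$ has no solutions, exactly one solution, or exactly two solutions. (ii) $z_0\in\mathbb{C}$ is a solution of $( * )$ if and only if $z_0\in[\hat\rho,0)\cup(0,\rho]$, $z_0\in\{\zeta,\hat\zeta\}$, $d>0$, and $q-1/\kappa\le \mu z_0$. In particular, whenever one of $\zeta,\hat\zeta$ is a solution of $( * )$, we have $\zeta\neq\hat\zeta$. (iii) If $\zeta$ is a solution of $( * )$ then $\zeta>0$; if $\hat\zeta$ is a solution of $( * )$ then $\hat\zeta<0$. Consequently, if both are solutions, then $\hat\rho\le\hat\zeta<0<\zeta\le\rho$. (iv) If $z_0$ solves $( * )$ and $\hat\rho<z_0<\rho$, then $z_0$ is a simple zero of the function $q-\psi_X(z)$ (which is analytic near $z_0$). (v) If $\zeta\in\mathbb{R}$ then $\hat\rho\le\zeta\le\rho$; if $\hat\zeta\in\mathbb{R}$ then $\hat\rho\le\hat\zeta\le\rho$. (vi) Neither $\rho=\hat\zeta$ nor $\hat\rho=\zeta$ is possible. (vii) One has both $\rho=\zeta$ and $\hat\rho=\hat\zeta$ if and only if $\mu=0$ and $q=1/\kappa$.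
   Context: Parameters: $q>0,\kappa>0,\sigma>0,\mu\in\mathbb{R},\theta\in\mathbb{R}$. The Laplace exponent of the Normal Inverse Gaussian (NIG) process with parameters $(\theta,\sigma,\kappa,\mu)$ is $$\psi_X(z)=\frac1\kappa-\frac1\kappa\sqrt{1-2\kappa\theta z-\kappa\sigma^2z^2}+\mu z,$$ where $\sqrt{\cdot}$ denotes the principal square root (values with nonnegative real part; for a negative real number $-y$ it equals $\iota\sqrt{y}$), $\iota=\sqrt{-1}$. Put $$\rho:=\frac{-\theta+\sqrt{\theta^2+\sigma^2/\kappa}}{\sigma^2},\qquad \hat\rho:=\frac{-\theta-\sqrt{\theta^2+\sigma^2/\kappa}}{\sigma^2},$$ so that $p(z):=1-2\kappa\theta z-\kappa\sigma^2z^2=(1-z/\rho)(1-z/\hat\rho)$ and $\hat\rho<0<\rho$. Further put $$d:=\theta^2+\mu^2-2\theta\mu(q\kappa-1)+q\sigma^2(2-q\kappa),$$ $$\zeta:=\frac{-\theta-\mu+\kappa\mu q+\sqrt d}{\kappa\mu^2+\sigma^2},\qquad \hat\zeta:=\frac{-\theta-\mu+\kappa\mu q-\sqrt d}{\kappa\mu^2+\sigma^2},$$ which are the two roots of the quadratic equation $p(z)=(1-q\kappa+\kappa\mu z)^2$ (possibly complex). *)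

(* Defs.v *)
From Stdlib Require Import Reals Lra.
Open Scope R_scope.

Record Cx : Type := mkC { Re : R ; Im : R }.

Definition RtoC (x : R) : Cx := mkC x 0.
Definition Cadd (z w : Cx) : Cx := mkC (Re z + Re w) (Im z + Im w).
Definition Copp (z : Cx) : Cx := mkC (- Re z) (- Im z).
Definition Csub (z w : Cx) : Cx := Cadd z (Copp w).
Definition Cmul (z w : Cx) : Cx :=
  mkC (Re z * Re w - Im z * Im w) (Re z * Im w + Im z * Re w).
Definition Cscale (a : R) (z : Cx) : Cx := mkC (a * Re z) (a * Im z).
Definition Cnorm (z : Cx) : R := sqrt (Re z ^ 2 + Im z ^ 2).

(** Principal square root: the root with nonnegative real part; on the
    negative real axis (real part of the root = 0) the root with
    nonnegative imaginary part, so that csqrt (-y) = i * sqrt y for y >= 0. *)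
Definition csqrt (z : Cx) : Cx :=
  mkC (sqrt ((Cnorm z + Re z) / 2))
      ((if Rle_dec 0 (Im z) then 1 else -1) * sqrt ((Cnorm z - Re z) / 2)).

Definition C_has_deriv (f : Cx -> Cx) (z0 l : Cx) : Prop :=
  forall eps : R, 0 < eps -> exists delta : R, 0 < delta /\
    forall h : Cx, Cnorm h < delta ->
      Cnorm (Csub (Csub (f (Cadd z0 h)) (f z0)) (Cmul l h)) <= eps * Cnorm h.

Definition C_analytic_near (f : Cx -> Cx) (z0 : Cx) : Prop :=
  exists r : R, 0 < r /\ forall z : Cx, Cnorm (Csub z z0) < r ->
    exists l : Cx, C_has_deriv f z l.

Definition simple_zero (f : Cx -> Cx) (z0 : Cx) : Prop :=
  f z0 = RtoC 0 /\ C_analytic_near f z0 /\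
  exists l : Cx, C_has_deriv f z0 l /\ l <> RtoC 0.

Section NIG.
Variables (q kappa sigma mu theta : R).

Definition pNIG (z : Cx) : Cx :=
  Csub (Csub (RtoC 1) (Cscale (2 * kappa * theta) z))
       (Cscale (kappa * sigma ^ 2) (Cmul z z)).

Definition psiX (z : Cx) : Cx :=
  Cadd (Csub (RtoC (1 / kappa)) (Cscale (1 / kappa) (csqrt (pNIG z))))
       (Cscale mu z).

Definition rho : R := (- theta + sqrt (theta ^ 2 + sigma ^ 2 / kappa)) / sigma ^ 2.
Definition rhohat : R := (- theta - sqrt (theta ^ 2 + sigma ^ 2 / kappa)) / sigma ^ 2.

Definition dNIG : R :=
  theta ^ 2 + mu ^ 2 - 2 * theta * mu * (q * kappa - 1) + q * sigma ^ 2 * (2 - q * kappa).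

Definition zeta : Cx :=
  Cscale (1 / (kappa * mu ^ 2 + sigma ^ 2))
         (Cadd (RtoC (- theta - mu + kappa * mu * q)) (csqrt (RtoC dNIG))).
Definition zetahat : Cx :=
  Cscale (1 / (kappa * mu ^ 2 + sigma ^ 2))
         (Csub (RtoC (- theta - mu + kappa * mu * q)) (csqrt (RtoC dNIG))).

Definition is_sol (z : Cx) : Prop := psiX z = RtoC q.

End NIG.

(* Main.v *)
Require Import Defs.
From Stdlib Require Import Reals Lra Psatz Ring.
Open Scope R_scope.

Lemma Cx_ext z w : Re z = Re w -> Im z = Im w -> z = w.
Proof. destruct z, w; simpl; intros; subst; reflexivity. Qed.

Lemma Cx_ring : ring_theory (RtoC 0) (RtoC 1) Cadd Cmul Csub Copp (@eq Cx).
Proof.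
  constructor; intros; apply Cx_ext; unfold Csub, Cadd, Cmul, Copp, RtoC; simpl; ring.
Qed.
Add Ring CxRing : Cx_ring.

Lemma Cscale_mul a z : Cscale a z = Cmul (RtoC a) z.
Proof. apply Cx_ext; unfold Cscale, Cmul, RtoC; simpl; ring. Qed.

Lemma test (a b c : Cx) : Cmul (Cadd a b) (Csub a b) = Csub (Cmul a a) (Cmul b b).
Proof. ring. Qed.

Lemma sumsq_ge0 a b : 0 <= a ^ 2 + b ^ 2.
Proof. apply Rplus_le_le_0_compat; apply pow2_ge_0. Qed.

Lemma sqrt_le_intro x y : 0 <= y -> x <= y * y -> sqrt x <= y.
Proof. intros Hy Hx. rewrite <- (sqrt_square y Hy). apply sqrt_le_1_alt. exact Hx. Qed.

Lemma Cnorm_ge0 z : 0 <= Cnorm z.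
Proof. apply sqrt_pos. Qed.

Lemma Cnorm_sq z : Cnorm z * Cnorm z = Re z ^ 2 + Im z ^ 2.
Proof. unfold Cnorm. apply sqrt_sqrt. nra. Qed.

Lemma Re_le_Cnorm z : Rabs (Re z) <= Cnorm z.
Proof.
  unfold Cnorm. rewrite <- sqrt_Rsqr_abs. apply sqrt_le_1_alt. unfold Rsqr. nra.
Qed.

Lemma Re_le_Cnorm' z : Re z <= Cnorm z.
Proof. pose proof (Re_le_Cnorm z). pose proof (Rle_abs (Re z)). lra. Qed.

Lemma Cnorm_mul z w : Cnorm (Cmul z w) = Cnorm z * Cnorm w.
Proof.
  unfold Cnorm, Cmul; simpl. rewrite <- sqrt_mult by apply sumsq_ge0. f_equal. ring.
Qed.

Lemma Cnorm_triangle z w : Cnorm (Cadd z w) <= Cnorm z + Cnorm w.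
Proof.
  pose proof (Cnorm_sq z). pose proof (Cnorm_sq w).
  pose proof (Cnorm_ge0 z). pose proof (Cnorm_ge0 w).
  assert (HM : Rabs (Re z * Re w + Im z * Im w) <= Cnorm z * Cnorm w).
  { unfold Cnorm. rewrite <- sqrt_mult by apply sumsq_ge0. rewrite <- sqrt_Rsqr_abs. apply sqrt_le_1_alt.
    unfold Rsqr. clear. pose proof (pow2_ge_0 (Re z * Im w - Im z * Re w)). nra. }
  pose proof (Rle_abs (Re z * Re w + Im z * Im w)).
  unfold Cnorm at 1. apply sqrt_le_intro. lra. unfold Cadd; simpl. nra.
Qed.

Lemma Cnorm_scale a z : Cnorm (Cscale a z) = Rabs a * Cnorm z.
Proof.
  unfold Cnorm, Cscale; simpl. rewrite <- (sqrt_Rsqr_abs a). rewrite <- sqrt_mult by (unfold Rsqr; nra).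
  f_equal. unfold Rsqr. ring.
Qed.

Lemma Cnorm_opp z : Cnorm (Copp z) = Cnorm z.
Proof. unfold Cnorm, Copp; simpl. f_equal. ring. Qed.

Lemma Cnorm_RtoC a : Cnorm (RtoC a) = Rabs a.
Proof. unfold Cnorm, RtoC; simpl. rewrite <- sqrt_Rsqr_abs. f_equal. unfold Rsqr. ring. Qed.

Lemma csqrt_sq z : Cmul (csqrt z) (csqrt z) = z.
Proof.
  pose proof (Cnorm_sq z) as Hn. pose proof (Re_le_Cnorm z) as Ha.
  pose proof (Cnorm_ge0 z).
  assert (H1 : 0 <= (Cnorm z + Re z) / 2). { pose proof (Rle_abs (- Re z)). rewrite Rabs_Ropp in H0. lra. }
  assert (H2 : 0 <= (Cnorm z - Re z) / 2). { pose proof (Rle_abs (Re z)). lra. }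
  unfold csqrt, Cmul; apply Cx_ext; simpl.
  - destruct (Rle_dec 0 (Im z)).
    + rewrite !Rmult_1_l, !sqrt_sqrt by lra. lra.
    + replace (sqrt ((Cnorm z + Re z) / 2) * sqrt ((Cnorm z + Re z) / 2)) with ((Cnorm z + Re z) / 2) by (rewrite sqrt_sqrt; lra).
      replace (-1 * sqrt ((Cnorm z - Re z) / 2) * (-1 * sqrt ((Cnorm z - Re z) / 2))) with (sqrt ((Cnorm z - Re z) / 2) * sqrt ((Cnorm z - Re z) / 2)) by ring.
      rewrite sqrt_sqrt by lra. lra.
  - assert (E : sqrt ((Cnorm z + Re z) / 2) * sqrt ((Cnorm z - Re z) / 2) = Rabs (Im z / 2)).
    { rewrite <- sqrt_mult by lra. rewrite <- sqrt_Rsqr_abs. f_equal. unfold Rsqr.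
      replace ((Cnorm z + Re z) / 2 * ((Cnorm z - Re z) / 2)) with ((Cnorm z * Cnorm z - Re z ^ 2) / 4) by field.
      rewrite Hn. field. }
    destruct (Rle_dec 0 (Im z)).
    + rewrite Rabs_right in E by lra. lra.
    + rewrite Rabs_left in E by lra. lra.
Qed.

Lemma csqrt_Re_ge0 z : 0 <= Re (csqrt z).
Proof. unfold csqrt; simpl. apply sqrt_pos. Qed.

Lemma csqrt_Re_pos z : 0 < Re z -> 0 < Re (csqrt z).
Proof.
  intros H. unfold csqrt; simpl. apply sqrt_lt_R0. pose proof (Cnorm_ge0 z). lra.
Qed.

Lemma csqrt_nonneg a : 0 <= a -> csqrt (RtoC a) = RtoC (sqrt a).
Proof.
  intros H. unfold csqrt. rewrite Cnorm_RtoC, Rabs_right by lra. unfold RtoC; simpl.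
  apply Cx_ext; simpl. f_equal. lra.
  replace ((a - a)/2) with 0 by lra. rewrite sqrt_0. destruct (Rle_dec 0 0); lra.
Qed.

Lemma csqrt_neg a : a < 0 -> csqrt (RtoC a) = mkC 0 (sqrt (- a)).
Proof.
  intros H. unfold csqrt. rewrite Cnorm_RtoC, Rabs_left by lra. unfold RtoC; simpl.
  apply Cx_ext; simpl. replace ((-a+a)/2) with 0 by lra. apply sqrt_0.
  destruct (Rle_dec 0 0); try lra. rewrite Rmult_1_l. f_equal. lra.
Qed.

Lemma root_id q k s m t x :
  (k * m ^ 2 + s ^ 2) * ((1 - q * k + k * m * x) ^ 2 - (1 - 2 * k * t * x - k * s ^ 2 * x ^ 2))
  = k * (((k * m ^ 2 + s ^ 2) * x + (t + m - k * m * q)) ^ 2 - dNIG q k s m t).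
Proof. unfold dNIG. ring. Qed.

Lemma rho_props k s t : 0 < k -> 0 < s ->
  rhohat k s t < rho k s t /\
  forall x, 1 - 2 * k * t * x - k * s ^ 2 * x ^ 2 = - k * s ^ 2 * (x - rho k s t) * (x - rhohat k s t).
Proof.
  intros hk hs. unfold rho, rhohat.
  assert (hp : 0 < t ^ 2 + s ^ 2 / k). { assert (0 < s^2/k) by (apply Rdiv_lt_0_compat; nra). nra. }
  pose proof (sqrt_lt_R0 _ hp) as Hq. pose proof (sqrt_sqrt _ (Rlt_le _ _ hp)) as Hsq.
  assert (0 < s ^ 2) by nra.
  split.
  - apply Rmult_lt_compat_r. apply Rinv_0_lt_compat; lra. lra.
  - intros x. set (r := sqrt (t ^ 2 + s ^ 2 / k)) in *. field_simplify; try lra.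
    replace (r ^ 2) with (r * r) by ring. rewrite Hsq. field. lra.
Qed.

Lemma p_nonneg_interval k s t x : 0 < k -> 0 < s ->
  0 <= 1 - 2 * k * t * x - k * s ^ 2 * x ^ 2 -> rhohat k s t <= x <= rho k s t.
Proof.
  intros hk hs H. destruct (rho_props k s t hk hs) as [Hl Hf]. rewrite Hf in H.
  assert (0 < k * s^2) by (apply Rmult_lt_0_compat; nra).
  assert (Hc : (x - rho k s t) * (x - rhohat k s t) <= 0).
  { destruct (Rle_dec ((x - rho k s t) * (x - rhohat k s t)) 0); auto. nra. }
  split; nra.
Qed.

Lemma p_pos_interval k s t x : 0 < k -> 0 < s ->
  rhohat k s t < x < rho k s t -> 0 < 1 - 2 * k * t * x - k * s ^ 2 * x ^ 2.
Proof.
  intros hk hs H. destruct (rho_props k s t hk hs) as [Hl Hf]. rewrite Hf.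
  assert (0 < k * s^2) by (apply Rmult_lt_0_compat; nra).
  assert ((x - rho k s t) * (x - rhohat k s t) < 0) by nra. nra.
Qed.

Lemma A_nonneg_d_pos q k s m t : 0 < q -> 0 < k -> 0 < s ->
  0 <= - (s ^ 2 * (q * k - 1) + k * m * t) -> 0 < dNIG q k s m t.
Proof.
  intros hq hk hs HA. unfold dNIG.
  set (e := q * k - 1) in *.
  assert (he : 0 < 1 + e) by (unfold e; nra).
  assert (Hq : q = (1 + e) / k) by (unfold e; field; lra).
  assert (Hmt : m * t <= - s ^ 2 * e / k).
  { apply (Rmult_le_reg_l k); auto. field_simplify; lra. }
  assert (H1 : - 2 * t * m * (1 + e) >= 2 * s ^ 2 * e * (1 + e) / k).
  { assert (- t * m >= s ^ 2 * e / k) by (unfold Rdiv in *; lra).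
    unfold Rdiv in *. nra. }
  assert (H2 : t ^ 2 + m ^ 2 >= - 2 * t * m) by (clear; pose proof (pow2_ge_0 (t+m)); nra).
  replace (2 * t * m * (q * k - 1)) with (2 * t * m * e) by reflexivity.
  rewrite Hq.
  assert (0 < (1 + e) ^ 2 * s ^ 2 / k).
  { apply Rdiv_lt_0_compat; auto. apply Rmult_lt_0_compat; nra. }
  replace ((1 + e) / k * s ^ 2 * (2 - (1 + e) / k * k)) with ((1+e) * s^2 * (1 - e) / k) by (field; lra).
  replace ((1 + e) ^ 2 * s ^ 2 / k) with (2 * s ^ 2 * e * (1 + e) / k + (1+e) * s^2 * (1 - e) / k) in H by (field; lra).
  lra.
Qed.

Lemma key_iii q k s m t r : 0 < q -> 0 < k -> 0 < s -> 0 <= r -> r ^ 2 = dNIG q k s m t ->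
  0 <= - (s ^ 2 * (q * k - 1) + k * m * t) + k * m * r -> (t + m - k * m * q) < r.
Proof.
  intros hq hk hs hr Hd HA.
  destruct (Rlt_le_dec (t + m - k * m * q) r) as [H|H]; auto. exfalso.
  set (e := q * k - 1) in *.
  assert (he : 0 < 1 + e) by (unfold e; nra).
  set (B := t + m - k * m * q) in *.
  assert (HB : B = t - m * e) by (unfold B, e; ring).
  set (D := k * m ^ 2 + s ^ 2).
  assert (HD : 0 < D) by (unfold D; nra).
  assert (Hbr : k * (B ^ 2 - r ^ 2) = D * (e ^ 2 - 1)).
  { rewrite Hd. unfold dNIG, B, D, e. ring. }
  assert (HBr : 0 <= B - r) by lra.
  destruct (Rlt_le_dec 0 m) as [Hm|Hm].
  - (* m > 0 : k m (r - t) >= s^2 e, and r - t <= - m e *)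
    assert (e1 : B ^ 2 - r ^ 2 >= 0) by nra.
    assert (e2 : e ^ 2 - 1 >= 0) by (destruct (Rge_dec (e^2-1) 0); auto; nra).
    assert (e3 : e >= 1) by nra.
    assert (f1 : r - t <= - m * e) by (rewrite HB in H; lra).
    assert (f2 : k * m * (r - t) <= k * m * (- m * e)).
    { apply Rmult_le_compat_l; [nra|lra]. }
    assert (f3 : 0 < s ^ 2 * e) by nra.
    assert (f4 : 0 <= k * m * m * e) by (apply Rmult_le_pos; [nra|lra]).
    nra.
  - destruct (Req_dec m 0) as [Hm0|Hm0].
    + subst m. assert (e1 : B ^ 2 - r ^ 2 >= 0) by nra.
      assert (e2 : e ^ 2 - 1 >= 0) by (destruct (Rge_dec (e^2-1) 0); auto; nra).
      assert (e3 : e >= 1) by nra. nra.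
    + set (n := - m). assert (hn : 0 < n) by (unfold n; lra).
      (* -k n (r - t) >= s^2 e  => B - r >= e D/(k n) *)
      assert (e1 : B ^ 2 - r ^ 2 >= 0) by nra.
      assert (e2 : e ^ 2 - 1 >= 0) by (destruct (Rge_dec (e^2-1) 0); auto; nra).
      assert (e3 : e >= 1) by nra.
      assert (Hk1 : k * n * (B - r) >= e * D).
      { rewrite HB. unfold D, n. nra. }
      assert (0 <= k * n * r) by (apply Rmult_le_pos; [nra|lra]).
      assert (Hk2 : k * n * (B + r) >= e * D) by nra.
      assert (Hk3 : (k * n) ^ 2 * (B ^ 2 - r ^ 2) >= e ^ 2 * D ^ 2).
      { replace ((k * n) ^ 2 * (B ^ 2 - r ^ 2)) with ((k * n * (B - r)) * (k * n * (B + r))) by ring.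
        assert (0 <= e * D) by nra. nra. }
      assert (Hk4 : k * n ^ 2 * (D * (e ^ 2 - 1)) >= e ^ 2 * D ^ 2).
      { rewrite <- Hbr. nra. }
      assert (Hk5 : k * n ^ 2 * (e ^ 2 - 1) >= e ^ 2 * D) by nra.
      unfold D in Hk5. replace (m ^ 2) with (n ^ 2) in Hk5 by (unfold n; ring).
      nra.
Qed.

Definition wf q k m x := 1 - q * k + k * m * x.
Definition pr k s t x := 1 - 2 * k * t * x - k * s ^ 2 * x ^ 2.

Lemma zeta_pos q k s m t : 0 <= dNIG q k s m t ->
  zeta q k s m t = mkC (1 / (k * m ^ 2 + s ^ 2) * ((- t - m + k * m * q) + sqrt (dNIG q k s m t))) 0.
Proof.
  intros H. unfold zeta. rewrite csqrt_nonneg by auto. apply Cx_ext; unfold Cscale, Cadd, RtoC; simpl; ring.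
Qed.
Lemma zetahat_pos q k s m t : 0 <= dNIG q k s m t ->
  zetahat q k s m t = mkC (1 / (k * m ^ 2 + s ^ 2) * ((- t - m + k * m * q) - sqrt (dNIG q k s m t))) 0.
Proof.
  intros H. unfold zetahat, Csub. rewrite csqrt_nonneg by auto. apply Cx_ext; unfold Cscale, Cadd, Copp, RtoC; simpl; ring.
Qed.
Lemma zeta_neg q k s m t : dNIG q k s m t < 0 ->
  zeta q k s m t = mkC (1 / (k * m ^ 2 + s ^ 2) * (- t - m + k * m * q)) (1 / (k * m ^ 2 + s ^ 2) * sqrt (- dNIG q k s m t)).
Proof.
  intros H. unfold zeta. rewrite csqrt_neg by auto. apply Cx_ext; unfold Cscale, Cadd, RtoC; simpl; ring.
Qed.
Lemma zetahat_neg q k s m t : dNIG q k s m t < 0 ->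
  zetahat q k s m t = mkC (1 / (k * m ^ 2 + s ^ 2) * (- t - m + k * m * q)) (- (1 / (k * m ^ 2 + s ^ 2) * sqrt (- dNIG q k s m t))).
Proof.
  intros H. unfold zetahat, Csub. rewrite csqrt_neg by auto. apply Cx_ext; unfold Cscale, Cadd, Copp, RtoC; simpl; ring.
Qed.

Lemma pNIG_real k s t x : pNIG k s t (mkC x 0) = RtoC (pr k s t x).
Proof. unfold pNIG, pr, Csub, Cadd, Copp, Cscale, Cmul, RtoC. apply Cx_ext; simpl; ring. Qed.

Lemma sol_fwd q k s m t z : 0 < q -> 0 < k -> 0 < s ->
  is_sol q k s m t z ->
  Im z = 0 /\ 0 < dNIG q k s m t /\ (z = zeta q k s m t \/ z = zetahat q k s m t) /\
  0 <= wf q k m (Re z) /\ csqrt (pNIG k s t z) = RtoC (wf q k m (Re z)) /\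
  pr k s t (Re z) = (wf q k m (Re z)) ^ 2.
Proof.
  intros hq hk hs Hs. unfold is_sol, psiX in Hs.
  pose proof (csqrt_sq (pNIG k s t z)) as Hsq.
  pose proof (csqrt_Re_ge0 (pNIG k s t z)) as Hge.
  set (u := csqrt (pNIG k s t z)) in *. clearbody u.
  assert (HRe := f_equal Re Hs). assert (HIm := f_equal Im Hs).
  unfold Cadd, Csub, Copp, Cscale, RtoC in HRe, HIm; simpl in HRe, HIm.
  assert (Hu1 : Re u = wf q k m (Re z)).
  { unfold wf. assert (h1 : 1 / k * Re u = 1 / k + m * Re z - q) by lra.
    replace (Re u) with (k * (1 / k * Re u)) by (field; lra). rewrite h1. field; lra. }
  assert (Hu2 : Im u = k * m * Im z).
  { assert (h1 : 1 / k * Im u = m * Im z) by lra.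
    replace (Im u) with (k * (1 / k * Im u)) by (field; lra). rewrite h1. ring. }
  assert (E1 := f_equal Re Hsq). assert (E2 := f_equal Im Hsq).
  unfold pNIG, Cmul, Csub, Cadd, Copp, Cscale, RtoC in E1, E2; simpl in E1, E2.
  rewrite Hu1, Hu2 in E1, E2. unfold wf in *.
  set (x := Re z) in *. set (y := Im z) in *.
  set (D := k * m ^ 2 + s ^ 2). assert (HD : 0 < D) by (unfold D; nra).
  set (B := t + m - k * m * q).
  set (d := dNIG q k s m t).
  assert (I1 : k * ((D * x + B) ^ 2 - (D * y) ^ 2 - d) = 0).
  { replace (k * ((D * x + B) ^ 2 - (D * y) ^ 2 - d)) with
     (D * (((1 - q * k + k * m * x) * (1 - q * k + k * m * x) - k * m * y * (k * m * y)) -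
       (1 - 2 * k * t * x - k * s ^ 2 * (x * x - y * y))))
     by (unfold D, B, d, dNIG; ring).
    rewrite E1. ring. }
  assert (I2 : k * (2 * (D * x + B) * (D * y)) = 0).
  { replace (k * (2 * (D * x + B) * (D * y))) with
     (D * (((1 - q * k + k * m * x) * (k * m * y) + k * m * y * (1 - q * k + k * m * x)) -
       (0 - 2 * k * t * y - k * s ^ 2 * (x * y + y * x))))
     by (unfold D, B, d, dNIG; ring).
    rewrite E2. ring. }
  assert (J1 : (D * x + B) ^ 2 - (D * y) ^ 2 = d).
  { apply Rmult_integral in I1. destruct I1; lra. }
  assert (J2 : (D * x + B) * (D * y) = 0).
  { apply Rmult_integral in I2. destruct I2; lra. }
  assert (Hw : 0 <= 1 - q * k + k * m * x).
  { rewrite <- Hu1. exact Hge. }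
  assert (Hdpos : 0 < d).
  { destruct (Rlt_le_dec 0 d) as [h|h]; auto. exfalso.
    assert (HX : D * x + B = 0).
    { apply Rmult_integral in J2. destruct J2 as [h2|h2]; auto.
      rewrite h2 in J1. assert ((D * x + B) ^ 2 <= 0) by lra.
      assert ((D*x+B)^2 = 0) by (pose proof (pow2_ge_0 (D*x+B)); lra).
      assert (H1 : (D*x+B)*(D*x+B) = 0) by (rewrite <- H0; ring). apply Rmult_integral in H1; destruct H1; auto. }
    assert (HA : 0 <= - (s ^ 2 * (q * k - 1) + k * m * t)).
    { replace (- (s ^ 2 * (q * k - 1) + k * m * t)) with (D * (1 - q * k + k * m * x) - k * m * (D * x + B))
        by (unfold D, B; ring).
      rewrite HX. assert (0 <= D * (1 - q * k + k * m * x)) by (apply Rmult_le_pos; lra). lra. }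
    pose proof (A_nonneg_d_pos q k s m t hq hk hs HA). fold d in H. lra. }
  assert (Hy : y = 0).
  { apply Rmult_integral in J2. destruct J2 as [h2|h2].
    - rewrite h2 in J1. pose proof (pow2_ge_0 (D*y)). lra.
    - apply Rmult_integral in h2. destruct h2; lra. }
  rewrite Hy in J1. replace ((D * 0) ^ 2) with 0 in J1 by ring.
  pose proof (sqrt_sqrt d (Rlt_le _ _ Hdpos)) as Hsd.
  assert (Hroot : pr k s t x = (1 - q * k + k * m * x) ^ 2).
  { rewrite Hy in E1. unfold pr. nra. }
  split; [exact Hy|]. split; [exact Hdpos|]. split.
  { assert (HXX : (D * x + B - sqrt d) * (D * x + B + sqrt d) = 0) by nra.
    apply Rmult_integral in HXX. destruct HXX as [h|h].
    - left. rewrite zeta_pos by (fold d; lra). apply Cx_ext; simpl. fold D d. change (Re z) with x.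
      replace x with (1/D*(D*x)) by (field; lra). f_equal. unfold B in h. lra. exact Hy.
    - right. rewrite zetahat_pos by (fold d; lra). apply Cx_ext; simpl. fold D d. change (Re z) with x.
      replace x with (1/D*(D*x)) by (field; lra). f_equal. unfold B in h. lra. exact Hy. }
  split; [exact Hw|]. split; [|exact Hroot].
  apply Cx_ext; simpl. exact Hu1. rewrite Hu2. fold y. rewrite Hy. ring.
Qed.

Definition Cinv (w : Cx) : Cx := mkC (Re w / (Re w ^ 2 + Im w ^ 2)) (- Im w / (Re w ^ 2 + Im w ^ 2)).

Lemma Cinv_r w : 0 < Re w -> Cmul w (Cinv w) = RtoC 1.
Proof.
  intros H. assert (0 < Re w ^ 2 + Im w ^ 2) by nra.
  unfold Cinv, Cmul, RtoC; apply Cx_ext; simpl; field; lra.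
Qed.

Lemma RtoC2 : RtoC 2 = Cadd (RtoC 1) (RtoC 1).
Proof. unfold RtoC, Cadd; apply Cx_ext; simpl; ring. Qed.

Definition dP k s t (z : Cx) : Cx := Cadd (RtoC (- 2 * k * t)) (Cscale (- 2 * k * s ^ 2) z).

Lemma dp_id k s t z h :
  Csub (pNIG k s t (Cadd z h)) (pNIG k s t z) =
  Cadd (Cmul (dP k s t z) h) (Cscale (- (k * s ^ 2)) (Cmul h h)).
Proof. unfold pNIG, dP, Csub, Cadd, Copp, Cscale, Cmul, RtoC; apply Cx_ext; simpl; ring. Qed.

Lemma Cnorm_sub_le z w : Cnorm (Csub z w) <= Cnorm z + Cnorm w.
Proof. unfold Csub. rewrite <- (Cnorm_opp w). apply Cnorm_triangle. Qed.

Lemma Cnorm_dp k s t z h : 0 < k -> 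
  Cnorm (Cadd (Cmul (dP k s t z) h) (Cscale (- (k * s ^ 2)) (Cmul h h)))
  <= Cnorm h * (Cnorm (dP k s t z) + k * s ^ 2 * Cnorm h).
Proof.
  intros hk. eapply Rle_trans. apply Cnorm_triangle.
  rewrite Cnorm_scale, !Cnorm_mul. rewrite Rabs_left1.
  2: { assert (0 <= k * s^2) by (apply Rmult_le_pos; [lra| apply pow2_ge_0]). lra. }
  lra.
Qed.

Definition Fq q k s m t := fun z => Csub (RtoC q) (psiX k s m t z).

Lemma deriv_at q k s m t z : 0 < k ->
  0 < Re (csqrt (pNIG k s t z)) ->
  C_has_deriv (Fq q k s m t) z
    (Csub (Cscale (1 / k) (Cmul (dP k s t z) (Cinv (Cscale 2 (csqrt (pNIG k s t z)))))) (RtoC m)).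
Proof.
  intros hk Ha eps heps.
  set (u0 := csqrt (pNIG k s t z)) in *.
  set (P := dP k s t z).
  set (L := Cmul P (Cinv (Cscale 2 u0))).
  assert (HL : Cmul (Cscale 2 u0) L = P).
  { unfold L. transitivity (Cmul P (Cmul (Cscale 2 u0) (Cinv (Cscale 2 u0)))). ring.
    rewrite Cinv_r. ring. change (Re (Cscale 2 u0)) with (2 * Re u0). lra. }
  set (a := Re u0) in *. set (NP := Cnorm P) in *. set (NL := Cnorm L) in *. set (c := k * s ^ 2) in *.
  assert (hc : 0 <= c) by (unfold c; apply Rmult_le_pos; [lra| apply pow2_ge_0]).
  assert (hNP : 0 <= NP) by apply Cnorm_ge0. assert (hNL : 0 <= NL) by apply Cnorm_ge0.
  set (K := (c + NL * (NP + c) / a) / a).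
  assert (hK : 0 <= K).
  { unfold K. apply Rmult_le_pos. 2: { left; apply Rinv_0_lt_compat; lra. }
    assert (0 <= NL * (NP + c) / a). { apply Rmult_le_pos. apply Rmult_le_pos; lra. left; apply Rinv_0_lt_compat; lra. } lra. }
  exists (Rmin 1 (eps * k / (K + 1))). split.
  { apply Rmin_glb_lt. lra. apply Rdiv_lt_0_compat. nra. lra. }
  intros h Hh.
  assert (Hh1 : Cnorm h <= 1) by (pose proof (Rmin_l 1 (eps * k / (K + 1))); lra).
  assert (Hh2 : Cnorm h <= eps * k / (K + 1)) by (pose proof (Rmin_r 1 (eps * k / (K + 1))); lra).
  assert (hh0 : 0 <= Cnorm h) by apply Cnorm_ge0.
  pose proof (csqrt_sq (pNIG k s t (Cadd z h))) as Hu1sq.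
  pose proof (csqrt_Re_ge0 (pNIG k s t (Cadd z h))) as Hu1ge.
  pose proof (csqrt_sq (pNIG k s t z)) as Hu0sq. fold u0 in Hu0sq.
  set (u1 := csqrt (pNIG k s t (Cadd z h))) in *.
  assert (HF : Csub (Csub (Fq q k s m t (Cadd z h)) (Fq q k s m t z))
           (Cmul (Csub (Cscale (1 / k) L) (RtoC m)) h)
         = Cscale (1 / k) (Csub (Csub u1 u0) (Cmul L h))).
  { unfold Fq, psiX. fold u0 u1. rewrite !Cscale_mul. ring. }
  rewrite HF, Cnorm_scale, Rabs_right by (apply Rle_ge; left; apply Rdiv_lt_0_compat; lra).
  set (E := Csub (Csub u1 u0) (Cmul L h)).
  assert (F1 : Cmul (Cadd u1 u0) (Csub u1 u0) = Cadd (Cmul P h) (Cscale (- c) (Cmul h h))).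
  { unfold P, c. rewrite <- dp_id. rewrite <- Hu1sq, <- Hu0sq. ring. }
  assert (F2 : Cmul (Cadd u1 u0) E = Csub (Cscale (- c) (Cmul h h)) (Cmul (Cmul L h) (Csub u1 u0))).
  { unfold E.
    transitivity (Csub (Cmul (Cadd u1 u0) (Csub u1 u0)) (Cadd (Cmul (Cmul (Cscale 2 u0) L) h) (Cmul (Cmul L h) (Csub u1 u0)))).
    { rewrite !Cscale_mul, RtoC2. ring. }
    rewrite F1, HL. ring. }
  assert (Hsum : a <= Cnorm (Cadd u1 u0)).
  { eapply Rle_trans. 2: apply Re_le_Cnorm'. change (a <= Re u1 + a). lra. }
  assert (Hdiff : a * Cnorm (Csub u1 u0) <= Cnorm h * (NP + c)).
  { apply Rle_trans with (Cnorm (Cadd u1 u0) * Cnorm (Csub u1 u0)).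
    { apply Rmult_le_compat_r. apply Cnorm_ge0. exact Hsum. }
    rewrite <- Cnorm_mul, F1. eapply Rle_trans. apply Cnorm_dp; auto. fold P NP c.
    apply Rmult_le_compat_l; auto. nra. }
  assert (HE : a * Cnorm E <= c * (Cnorm h * Cnorm h) + NL * Cnorm h * Cnorm (Csub u1 u0)).
  { apply Rle_trans with (Cnorm (Cadd u1 u0) * Cnorm E).
    { apply Rmult_le_compat_r. apply Cnorm_ge0. exact Hsum. }
    rewrite <- Cnorm_mul, F2. eapply Rle_trans. apply Cnorm_sub_le.
    rewrite Cnorm_scale, !Cnorm_mul. rewrite Rabs_left1 by lra. fold NL. lra. }
  assert (HE2 : Cnorm E <= Cnorm h * Cnorm h * K).
  { assert (hd : Cnorm (Csub u1 u0) <= Cnorm h * (NP + c) / a).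
    { apply (Rmult_le_reg_l a); auto. field_simplify; lra. }
    apply (Rmult_le_reg_l a); auto. unfold K.
    assert (NL * Cnorm h * Cnorm (Csub u1 u0) <= NL * Cnorm h * (Cnorm h * (NP + c) / a)).
    { apply Rmult_le_compat_l; auto. nra. }
    replace (a * (Cnorm h * Cnorm h * ((c + NL * (NP + c) / a) / a))) with
       (c * (Cnorm h * Cnorm h) + NL * Cnorm h * (Cnorm h * (NP + c) / a)) by (field; lra).
    lra. }
  assert (Hk : Cnorm h * K <= eps * k).
  { apply Rle_trans with (eps * k / (K + 1) * K). apply Rmult_le_compat_r; auto.
    apply Rle_trans with (eps * k / (K + 1) * (K + 1)). apply Rmult_le_compat_l. 
    apply Rlt_le, Rdiv_lt_0_compat; nra. lra. right; field; lra. }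
  apply Rle_trans with (1 / k * (Cnorm h * Cnorm h * K)).
  { apply Rmult_le_compat_l; auto. left; apply Rdiv_lt_0_compat; lra. }
  replace (1 / k * (Cnorm h * Cnorm h * K)) with (Cnorm h * (Cnorm h * K) / k) by (field; lra).
  replace (eps * Cnorm h) with (Cnorm h * (eps * k) / k) by (field; lra).
  unfold Rdiv. apply Rmult_le_compat_r. left; apply Rinv_0_lt_compat; lra.
  apply Rmult_le_compat_l; auto.
Qed.

Lemma Re_Csub a b : Re (Csub a b) = Re a - Re b.
Proof. destruct a, b; unfold Csub, Cadd, Copp; simpl; ring. Qed.

Lemma analytic_near q k s m t z0 : 0 < k -> 0 < Re (pNIG k s t z0) ->
  C_analytic_near (Fq q k s m t) z0.
Proof.
  intros hk HP.
  set (P0 := Re (pNIG k s t z0)) in *.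
  set (NP := Cnorm (dP k s t z0)). set (c := k * s ^ 2).
  assert (hc : 0 <= c) by (unfold c; apply Rmult_le_pos; [lra| apply pow2_ge_0]).
  assert (hNP : 0 <= NP) by apply Cnorm_ge0.
  exists (Rmin 1 (P0 / (NP + c + 1))). split.
  { apply Rmin_glb_lt. lra. apply Rdiv_lt_0_compat; lra. }
  intros z Hz. set (h := Csub z z0) in *.
  assert (Hzh : z = Cadd z0 h) by (unfold h; ring).
  assert (Hh1 : Cnorm h <= 1) by (pose proof (Rmin_l 1 (P0 / (NP + c + 1))); lra).
  assert (Hh2 : Cnorm h < P0 / (NP + c + 1)) by (pose proof (Rmin_r 1 (P0 / (NP + c + 1))); lra).
  assert (hh0 : 0 <= Cnorm h) by apply Cnorm_ge0.
  assert (Hpos : 0 < Re (pNIG k s t z)).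
  { pose proof (dp_id k s t z0 h) as Hd. rewrite <- Hzh in Hd.
    pose proof (Cnorm_dp k s t z0 h hk) as Hb. rewrite <- Hd in Hb. fold NP c in Hb.
    pose proof (Re_le_Cnorm (Csub (pNIG k s t z) (pNIG k s t z0))) as Hr.
    assert (HRe : Re (Csub (pNIG k s t z) (pNIG k s t z0)) = Re (pNIG k s t z) - P0).
    { rewrite Re_Csub. reflexivity. }
    rewrite HRe in Hr.
    assert (Cnorm h * (NP + c * Cnorm h) <= Cnorm h * (NP + c)).
    { apply Rmult_le_compat_l; auto. nra. }
    assert (Cnorm h * (NP + c) < P0).
    { apply Rle_lt_trans with (P0 / (NP + c + 1) * (NP + c)). apply Rmult_le_compat_r; lra.
      apply Rlt_le_trans with (P0 / (NP + c + 1) * (NP + c + 1)).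
      apply Rmult_lt_compat_l. apply Rdiv_lt_0_compat; lra. lra. right; field; lra. }
    pose proof (Rle_abs (- (Re (pNIG k s t z) - P0))). rewrite Rabs_Ropp in H1. lra. }
  eexists. apply deriv_at; auto. apply csqrt_Re_pos; auto.
Qed.

Lemma part_iv q k s m t z0 : 0 < q -> 0 < k -> 0 < s ->
  is_sol q k s m t z0 -> Im z0 = 0 -> rhohat k s t < Re z0 -> Re z0 < rho k s t ->
  simple_zero (fun z => Csub (RtoC q) (psiX k s m t z)) z0.
Proof.
  intros hq hk hs Hs Hy H1 H2.
  change (simple_zero (Fq q k s m t) z0).
  destruct (sol_fwd q k s m t z0 hq hk hs Hs) as (_ & Hd & _ & Hw & Hcs & Hroot).
  set (x0 := Re z0) in *.
  assert (Hz0 : z0 = mkC x0 0) by (apply Cx_ext; simpl; auto).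
  assert (Hp : 0 < pr k s t x0) by (apply p_pos_interval; auto).
  assert (HpN : pNIG k s t z0 = RtoC (pr k s t x0)) by (rewrite Hz0; apply pNIG_real).
  assert (Hw0 : 0 < wf q k m x0) by (rewrite Hroot in Hp; nra).
  split.
  { unfold Fq. unfold is_sol in Hs. rewrite Hs. apply Cx_ext; simpl; ring. }
  split.
  { apply analytic_near; auto. rewrite HpN. simpl. lra. }
  eexists. split.
  { apply deriv_at; auto. apply csqrt_Re_pos. rewrite HpN. simpl. lra. }
  rewrite Hcs. intros Hl. apply (f_equal Re) in Hl.
  rewrite Hz0 in Hl. unfold Csub, Cadd, Copp, Cscale, Cmul, Cinv, dP, RtoC in Hl. simpl in Hl.
  set (w := wf q k m x0) in *.
  assert (Hl2 : (- t - s ^ 2 * x0) / w - m = 0).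
  { rewrite <- Hl. field. lra. }
  assert (Hl3 : - t - s ^ 2 * x0 = m * w).
  { replace (- t - s ^ 2 * x0) with ((- t - s ^ 2 * x0) / w * w) by (field; lra). nra. }
  assert (HX : (k * m ^ 2 + s ^ 2) * x0 + (t + m - k * m * q) = 0).
  { unfold w, wf in Hl3. nra. }
  pose proof (root_id q k s m t x0) as Hr. unfold pr in Hroot. unfold w, wf in Hroot.
  rewrite <- Hroot in Hr. rewrite HX in Hr.
  assert (0 < k * dNIG q k s m t) by (apply Rmult_lt_0_compat; lra).
  nra.
Qed.

Lemma root_pr q k s m t x : 0 < k -> 0 < s ->
  ((k * m ^ 2 + s ^ 2) * x + (t + m - k * m * q)) ^ 2 = dNIG q k s m t ->
  pr k s t x = wf q k m x ^ 2.
Proof.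
  intros hk hs H. pose proof (root_id q k s m t x) as Hr. rewrite H in Hr.
  assert (0 < k * m ^ 2 + s ^ 2) by nra. unfold pr, wf.
  replace (k * (dNIG q k s m t - dNIG q k s m t)) with 0 in Hr by ring.
  apply Rmult_integral in Hr. destruct Hr; lra.
Qed.

Lemma sol_of_root q k s m t x : 0 < k -> 0 < s ->
  ((k * m ^ 2 + s ^ 2) * x + (t + m - k * m * q)) ^ 2 = dNIG q k s m t ->
  0 <= wf q k m x -> is_sol q k s m t (mkC x 0).
Proof.
  intros hk hs H Hw. pose proof (root_pr q k s m t x hk hs H) as Hp.
  unfold is_sol, psiX. rewrite pNIG_real, Hp.
  rewrite csqrt_nonneg by apply pow2_ge_0. rewrite sqrt_pow2 by auto.
  unfold wf. apply Cx_ext; unfold Cadd, Csub, Copp, Cscale, RtoC; simpl; field; lra.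
Qed.

Lemma zeta_root q k s m t : 0 < k -> 0 < s -> 0 <= dNIG q k s m t ->
  Im (zeta q k s m t) = 0 /\
  (k * m ^ 2 + s ^ 2) * Re (zeta q k s m t) + (t + m - k * m * q) = sqrt (dNIG q k s m t).
Proof.
  intros hk hs H. rewrite zeta_pos by auto. simpl. split; auto. field. nra.
Qed.

Lemma zetahat_root q k s m t : 0 < k -> 0 < s -> 0 <= dNIG q k s m t ->
  Im (zetahat q k s m t) = 0 /\
  (k * m ^ 2 + s ^ 2) * Re (zetahat q k s m t) + (t + m - k * m * q) = - sqrt (dNIG q k s m t).
Proof.
  intros hk hs H. rewrite zetahat_pos by auto. simpl. split; auto. field. nra.
Qed.

Lemma sq_sqrt_eq d : 0 <= d -> (sqrt d) ^ 2 = d.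
Proof. intros H. rewrite <- Rsqr_pow2. apply Rsqr_sqrt. auto. Qed.
Lemma sq_msqrt_eq d : 0 <= d -> (- sqrt d) ^ 2 = d.
Proof. intros H. replace ((- sqrt d) ^ 2) with ((sqrt d) ^ 2) by ring. apply sq_sqrt_eq; auto. Qed.

Lemma zeta_Im_d q k s m t : 0 < k -> 0 < s -> Im (zeta q k s m t) = 0 -> 0 <= dNIG q k s m t.
Proof.
  intros hk hs H. destruct (Rlt_le_dec (dNIG q k s m t) 0) as [h|h]; auto.
  rewrite zeta_neg in H by auto. cbn [Im] in H. exfalso.
  assert (0 < sqrt (- dNIG q k s m t)) by (apply sqrt_lt_R0; lra).
  assert (0 < 1 / (k * m ^ 2 + s ^ 2)) by (apply Rdiv_lt_0_compat; nra).
  apply Rmult_integral in H. destruct H; lra.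
Qed.
Lemma zetahat_Im_d q k s m t : 0 < k -> 0 < s -> Im (zetahat q k s m t) = 0 -> 0 <= dNIG q k s m t.
Proof.
  intros hk hs H. destruct (Rlt_le_dec (dNIG q k s m t) 0) as [h|h]; auto.
  rewrite zetahat_neg in H by auto. cbn [Im] in H. exfalso.
  assert (0 < sqrt (- dNIG q k s m t)) by (apply sqrt_lt_R0; lra).
  assert (0 < 1 / (k * m ^ 2 + s ^ 2)) by (apply Rdiv_lt_0_compat; nra).
  assert (H' : 1 / (k * m ^ 2 + s ^ 2) * sqrt (- dNIG q k s m t) = 0) by lra.
  apply Rmult_integral in H'. destruct H'; lra.
Qed.

Lemma endpoint_contra q k s m t x1 x2 : 0 < k -> 0 < s ->
  pr k s t x1 = 0 -> pr k s t x2 = 0 -> x1 <> x2 ->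
  (k * m ^ 2 + s ^ 2) * x1 + (t + m - k * m * q) = 0 -> dNIG q k s m t = 0 -> wf q k m x1 = 0 -> False.
Proof.
  intros hk hs H1 H2 Hne HX Hd Hw.
  pose proof (root_id q k s m t x2) as Hr. rewrite Hd in Hr. unfold pr in H2. rewrite H2 in Hr.
  unfold wf in Hw.
  assert (E1 : 1 - q * k + k * m * x2 = k * m * (x2 - x1)) by lra.
  assert (E2 : (k * m ^ 2 + s ^ 2) * x2 + (t + m - k * m * q) = (k * m ^ 2 + s ^ 2) * (x2 - x1)) by lra.
  rewrite E1, E2 in Hr.
  assert (hx : 0 < (x2 - x1) ^ 2). { assert (x2 - x1 <> 0) by lra. rewrite <- Rsqr_pow2. apply Rsqr_pos_lt. lra. }
  assert (HD : 0 < k * m ^ 2 + s ^ 2) by nra.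
  assert (Hr2 : k * (k * m ^ 2 + s ^ 2) * (x2 - x1) ^ 2 * (s ^ 2) = 0).
  { replace (k * (k * m ^ 2 + s ^ 2) * (x2 - x1) ^ 2 * s ^ 2) with
      (k * (((k * m ^ 2 + s ^ 2) * (x2 - x1)) ^ 2 - 0) - (k * m ^ 2 + s ^ 2) * ((k * m * (x2 - x1)) ^ 2 - 0)) by ring.
    rewrite <- Hr. ring. }
  assert (0 < k * (k * m ^ 2 + s ^ 2) * (x2 - x1) ^ 2 * (s ^ 2)).
  { assert (0 < s ^ 2) by (apply pow_lt; lra). apply Rmult_lt_0_compat; [apply Rmult_lt_0_compat; [apply Rmult_lt_0_compat|]|]; lra. }
  lra.
Qed.

Lemma rho_zero k s t : 0 < k -> 0 < s -> pr k s t (rho k s t) = 0 /\ pr k s t (rhohat k s t) = 0.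
Proof.
  intros hk hs. destruct (rho_props k s t hk hs) as [_ Hf]. unfold pr. rewrite !Hf. split; ring.
Qed.

Lemma wf_D_id q k s m t x :
  (k * m ^ 2 + s ^ 2) * wf q k m x =
  - (s ^ 2 * (q * k - 1) + k * m * t) + k * m * ((k * m ^ 2 + s ^ 2) * x + (t + m - k * m * q)).
Proof. unfold wf. ring. Qed.

Lemma ii_fwd q k s m t z : 0 < q -> 0 < k -> 0 < s -> is_sol q k s m t z ->
  (Im z = 0 /\ ((rhohat k s t <= Re z /\ Re z < 0) \/ (0 < Re z /\ Re z <= rho k s t))) /\
  (z = zeta q k s m t \/ z = zetahat q k s m t) /\ 0 < dNIG q k s m t /\ q - 1 / k <= m * Re z.
Proof.
  intros hq hk hs Hs. destruct (sol_fwd q k s m t z hq hk hs Hs) as (Hy & Hd & Hz & Hw & _ & Hroot).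
  assert (Hint : rhohat k s t <= Re z <= rho k s t).
  { apply p_nonneg_interval; auto. fold (pr k s t (Re z)). rewrite Hroot. apply pow2_ge_0. }
  assert (Hx0 : Re z <> 0).
  { intros h. rewrite h in Hroot, Hw. unfold pr, wf in Hroot, Hw. 
    assert (qk : 0 < q * k) by nra. nra. }
  split; [split; auto|]. destruct (Rlt_le_dec (Re z) 0); [left|right]; lra.
  split; auto. split; auto. unfold wf in Hw.
  assert (m * Re z - (q - 1 / k) = (1 - q * k + k * m * Re z) / k) by (field; lra).
  assert (0 <= (1 - q * k + k * m * Re z) / k) by (apply Rmult_le_pos; [lra| left; apply Rinv_0_lt_compat; lra]).
  lra.
Qed.

Lemma ii_bwd q k s m t z : 0 < q -> 0 < k -> 0 < s ->
  (Im z = 0 /\ ((rhohat k s t <= Re z /\ Re z < 0) \/ (0 < Re z /\ Re z <= rho k s t))) /\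
  (z = zeta q k s m t \/ z = zetahat q k s m t) /\ 0 < dNIG q k s m t /\ q - 1 / k <= m * Re z ->
  is_sol q k s m t z.
Proof.
  intros hq hk hs ((Hy & _) & Hz & Hd & Hq).
  assert (Hz0 : z = mkC (Re z) 0) by (apply Cx_ext; simpl; auto).
  rewrite Hz0. apply sol_of_root; auto.
  - destruct Hz as [Hz|Hz]; rewrite Hz.
    + destruct (zeta_root q k s m t hk hs (Rlt_le _ _ Hd)) as [_ ->]. apply sq_sqrt_eq; lra.
    + destruct (zetahat_root q k s m t hk hs (Rlt_le _ _ Hd)) as [_ ->]. apply sq_msqrt_eq; lra.
  - unfold wf. assert (1 - q * k + k * m * Re z = k * (m * Re z - (q - 1 / k))) by (field; lra).
    rewrite H. apply Rmult_le_pos; lra.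
Qed.

Lemma iii_ze q k s m t : 0 < q -> 0 < k -> 0 < s -> is_sol q k s m t (zeta q k s m t) ->
  Im (zeta q k s m t) = 0 /\ 0 < Re (zeta q k s m t).
Proof.
  intros hq hk hs Hs. destruct (sol_fwd q k s m t _ hq hk hs Hs) as (Hy & Hd & _ & Hw & _ & _).
  split; auto.
  destruct (zeta_root q k s m t hk hs (Rlt_le _ _ Hd)) as [_ HX].
  pose proof (wf_D_id q k s m t (Re (zeta q k s m t))) as Hi. rewrite HX in Hi.
  assert (HD : 0 < k * m ^ 2 + s ^ 2) by nra.
  assert (0 <= (k * m ^ 2 + s ^ 2) * wf q k m (Re (zeta q k s m t))) by (apply Rmult_le_pos; lra).
  pose proof (key_iii q k s m t (sqrt (dNIG q k s m t)) hq hk hs (sqrt_pos _) (sq_sqrt_eq _ (Rlt_le _ _ Hd))) as Hk.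
  assert (hB : t + m - k * m * q < sqrt (dNIG q k s m t)) by (apply Hk; lra).
  nra.
Qed.

Lemma dNIG_neg q k s m t : dNIG q k s (- m) (- t) = dNIG q k s m t.
Proof. unfold dNIG. ring. Qed.

Lemma iii_zeh q k s m t : 0 < q -> 0 < k -> 0 < s -> is_sol q k s m t (zetahat q k s m t) ->
  Im (zetahat q k s m t) = 0 /\ Re (zetahat q k s m t) < 0.
Proof.
  intros hq hk hs Hs. destruct (sol_fwd q k s m t _ hq hk hs Hs) as (Hy & Hd & _ & Hw & _ & _).
  split; auto.
  destruct (zetahat_root q k s m t hk hs (Rlt_le _ _ Hd)) as [_ HX].
  pose proof (wf_D_id q k s m t (Re (zetahat q k s m t))) as Hi. rewrite HX in Hi.
  assert (HD : 0 < k * m ^ 2 + s ^ 2) by nra.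
  assert (0 <= (k * m ^ 2 + s ^ 2) * wf q k m (Re (zetahat q k s m t))) by (apply Rmult_le_pos; lra).
  assert (Hsq : sqrt (dNIG q k s m t) ^ 2 = dNIG q k s (- m) (- t)).
  { rewrite dNIG_neg. apply sq_sqrt_eq; lra. }
  pose proof (key_iii q k s (- m) (- t) (sqrt (dNIG q k s m t)) hq hk hs (sqrt_pos _) Hsq) as Hk.
  assert (hB : - t + - m - k * - m * q < sqrt (dNIG q k s m t)) by (apply Hk; lra).
  nra.
Qed.

Lemma v_ze q k s m t : 0 < k -> 0 < s -> Im (zeta q k s m t) = 0 ->
  rhohat k s t <= Re (zeta q k s m t) <= rho k s t.
Proof.
  intros hk hs H. pose proof (zeta_Im_d q k s m t hk hs H) as Hd.
  destruct (zeta_root q k s m t hk hs Hd) as [_ HX].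
  apply p_nonneg_interval; auto. fold (pr k s t (Re (zeta q k s m t))).
  rewrite (root_pr q k s m t); auto. apply pow2_ge_0. rewrite HX. apply sq_sqrt_eq; auto.
Qed.

Lemma v_zeh q k s m t : 0 < k -> 0 < s -> Im (zetahat q k s m t) = 0 ->
  rhohat k s t <= Re (zetahat q k s m t) <= rho k s t.
Proof.
  intros hk hs H. pose proof (zetahat_Im_d q k s m t hk hs H) as Hd.
  destruct (zetahat_root q k s m t hk hs Hd) as [_ HX].
  apply p_nonneg_interval; auto. fold (pr k s t (Re (zetahat q k s m t))).
  rewrite (root_pr q k s m t); auto. apply pow2_ge_0. rewrite HX. apply sq_msqrt_eq; auto.
Qed.

Lemma vi_a q k s m t : 0 < k -> 0 < s -> RtoC (rho k s t) <> zetahat q k s m t.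
Proof.
  intros hk hs Heq.
  assert (HIm : Im (zetahat q k s m t) = 0) by (rewrite <- Heq; reflexivity).
  assert (HRe : Re (zetahat q k s m t) = rho k s t) by (rewrite <- Heq; reflexivity).
  pose proof (zetahat_Im_d q k s m t hk hs HIm) as Hd.
  destruct (zeta_root q k s m t hk hs Hd) as [HI1 HX1].
  destruct (zetahat_root q k s m t hk hs Hd) as [_ HX2].
  pose proof (v_ze q k s m t hk hs HI1) as Hv.
  assert (HD : 0 < k * m ^ 2 + s ^ 2) by nra.
  pose proof (sqrt_pos (dNIG q k s m t)).
  assert (Hs0 : sqrt (dNIG q k s m t) = 0) by nra.
  assert (Hd0 : dNIG q k s m t = 0).
  { rewrite <- (sq_sqrt_eq _ Hd), Hs0. ring. }
  destruct (rho_props k s t hk hs) as [Hlt _].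
  destruct (rho_zero k s t hk hs) as [Hr1 Hr2].
  rewrite HRe, Hs0 in HX2. replace (-0) with 0 in HX2 by ring.
  assert (Hw : wf q k m (rho k s t) = 0).
  { pose proof (root_pr q k s m t (rho k s t) hk hs) as Hp. rewrite HX2, Hd0 in Hp.
    assert (wf q k m (rho k s t) ^ 2 = 0) by (rewrite <- Hp; auto; ring).
    nra. }
  apply (endpoint_contra q k s m t (rho k s t) (rhohat k s t)); auto; lra.
Qed.

Lemma vi_b q k s m t : 0 < k -> 0 < s -> RtoC (rhohat k s t) <> zeta q k s m t.
Proof.
  intros hk hs Heq.
  assert (HIm : Im (zeta q k s m t) = 0) by (rewrite <- Heq; reflexivity).
  assert (HRe : Re (zeta q k s m t) = rhohat k s t) by (rewrite <- Heq; reflexivity).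
  pose proof (zeta_Im_d q k s m t hk hs HIm) as Hd.
  destruct (zeta_root q k s m t hk hs Hd) as [_ HX1].
  destruct (zetahat_root q k s m t hk hs Hd) as [HI2 HX2].
  pose proof (v_zeh q k s m t hk hs HI2) as Hv.
  assert (HD : 0 < k * m ^ 2 + s ^ 2) by nra.
  pose proof (sqrt_pos (dNIG q k s m t)).
  assert (Hs0 : sqrt (dNIG q k s m t) = 0) by nra.
  assert (Hd0 : dNIG q k s m t = 0).
  { rewrite <- (sq_sqrt_eq _ Hd), Hs0. ring. }
  destruct (rho_props k s t hk hs) as [Hlt _].
  destruct (rho_zero k s t hk hs) as [Hr1 Hr2].
  rewrite HRe, Hs0 in HX1.
  assert (Hw : wf q k m (rhohat k s t) = 0).
  { pose proof (root_pr q k s m t (rhohat k s t) hk hs) as Hp. rewrite HX1, Hd0 in Hp.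
    assert (wf q k m (rhohat k s t) ^ 2 = 0) by (rewrite <- Hp; auto; ring).
    nra. }
  apply (endpoint_contra q k s m t (rhohat k s t) (rho k s t)); auto; lra.
Qed.

Lemma vii q k s m t : 0 < q -> 0 < k -> 0 < s ->
  ((RtoC (rho k s t) = zeta q k s m t /\ RtoC (rhohat k s t) = zetahat q k s m t) <-> (m = 0 /\ q = 1 / k)).
Proof.
  intros hq hk hs. split.
  - intros [E1 E2].
    assert (HIm : Im (zeta q k s m t) = 0) by (rewrite <- E1; reflexivity).
    assert (HRe1 : Re (zeta q k s m t) = rho k s t) by (rewrite <- E1; reflexivity).
    assert (HRe2 : Re (zetahat q k s m t) = rhohat k s t) by (rewrite <- E2; reflexivity).
    pose proof (zeta_Im_d q k s m t hk hs HIm) as Hd.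
    destruct (zeta_root q k s m t hk hs Hd) as [_ HX1].
    destruct (zetahat_root q k s m t hk hs Hd) as [_ HX2].
    rewrite HRe1 in HX1. rewrite HRe2 in HX2.
    destruct (rho_props k s t hk hs) as [Hlt _].
    destruct (rho_zero k s t hk hs) as [Hr1 Hr2].
    assert (Hw1 : wf q k m (rho k s t) = 0).
    { pose proof (root_pr q k s m t (rho k s t) hk hs) as Hp. rewrite HX1, sq_sqrt_eq, Hr1 in Hp by auto.
      assert (wf q k m (rho k s t) ^ 2 = 0) by (rewrite <- Hp; auto). nra. }
    assert (Hw2 : wf q k m (rhohat k s t) = 0).
    { pose proof (root_pr q k s m t (rhohat k s t) hk hs) as Hp. rewrite HX2, sq_msqrt_eq, Hr2 in Hp by auto.
      assert (wf q k m (rhohat k s t) ^ 2 = 0) by (rewrite <- Hp; auto). nra. }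
    unfold wf in Hw1, Hw2.
    assert (Hm : k * m * (rho k s t - rhohat k s t) = 0) by lra.
    apply Rmult_integral in Hm. destruct Hm as [Hm|Hm]; [|lra].
    apply Rmult_integral in Hm. destruct Hm as [Hm|Hm]; [lra|].
    subst m. split; auto. field_simplify; try lra. 
    apply (Rmult_eq_reg_l k); [|lra]. field_simplify; lra.
  - intros [Hm Hq]. subst m.
    assert (Hd : dNIG q k s 0 t = t ^ 2 + s ^ 2 / k) by (unfold dNIG; rewrite Hq; field; lra).
    assert (Hdp : 0 <= dNIG q k s 0 t).
    { rewrite Hd. assert (0 <= s ^ 2 / k) by (apply Rmult_le_pos; [apply pow2_ge_0| left; apply Rinv_0_lt_compat; lra]).
      pose proof (pow2_ge_0 t). lra. }
    rewrite zeta_pos, zetahat_pos by auto. rewrite Hd.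
    unfold rho, rhohat, RtoC. assert (0 < s ^ 2) by (apply pow_lt; lra).
    split; apply Cx_ext; simpl; auto; field; lra.
Qed.

Theorem proposition2p1 (q kappa sigma mu theta : R)
  (hq : 0 < q) (hk : 0 < kappa) (hs : 0 < sigma) :
  let sol := is_sol q kappa sigma mu theta in
  let rh := rho kappa sigma theta in
  let rhh := rhohat kappa sigma theta in
  let d := dNIG q kappa sigma mu theta in
  let ze := zeta q kappa sigma mu theta in
  let zeh := zetahat q kappa sigma mu theta in
  (* (i) at most two solutions, i.e. none, exactly one or exactly two *)
  (forall z1 z2 z3 : Cx, sol z1 -> sol z2 -> sol z3 ->
      z1 = z2 \/ z1 = z3 \/ z2 = z3) /\
  (* (ii) characterisation of the solutions *)
  (forall z0 : Cx, sol z0 <->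
      (Im z0 = 0 /\ ((rhh <= Re z0 /\ Re z0 < 0) \/ (0 < Re z0 /\ Re z0 <= rh))) /\
      (z0 = ze \/ z0 = zeh) /\ 0 < d /\ q - 1 / kappa <= mu * Re z0) /\
  ((sol ze \/ sol zeh) -> ze <> zeh) /\
  (* (iii) *)
  (sol ze -> Im ze = 0 /\ 0 < Re ze) /\
  (sol zeh -> Im zeh = 0 /\ Re zeh < 0) /\
  (sol ze -> sol zeh -> rhh <= Re zeh /\ Re zeh < 0 /\ 0 < Re ze /\ Re ze <= rh) /\
  (* (iv) simple zero of q - psi_X *)
  (forall z0 : Cx, sol z0 -> Im z0 = 0 -> rhh < Re z0 -> Re z0 < rh ->
      simple_zero (fun z => Csub (RtoC q) (psiX kappa sigma mu theta z)) z0) /\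
  (* (v) *)
  (Im ze = 0 -> rhh <= Re ze /\ Re ze <= rh) /\
  (Im zeh = 0 -> rhh <= Re zeh /\ Re zeh <= rh) /\
  (* (vi) *)
  RtoC rh <> zeh /\ RtoC rhh <> ze /\
  (* (vii) *)
  ((RtoC rh = ze /\ RtoC rhh = zeh) <-> (mu = 0 /\ q = 1 / kappa)).
Proof.
  intros sol rh rhh d ze zeh. subst sol rh rhh d ze zeh.
  split.
  { intros z1 z2 z3 H1 H2 H3.
    destruct (sol_fwd _ _ _ _ _ _ hq hk hs H1) as (_ & _ & [e1|e1] & _).
    all: destruct (sol_fwd _ _ _ _ _ _ hq hk hs H2) as (_ & _ & [e2|e2] & _).
    all: destruct (sol_fwd _ _ _ _ _ _ hq hk hs H3) as (_ & _ & [e3|e3] & _).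
    all: subst; auto. }
  split.
  { intros z0. split. apply ii_fwd; auto. apply ii_bwd; auto. }
  split.
  { intros H Heq.
    assert (Hd : 0 < dNIG q kappa sigma mu theta).
    { destruct H as [H|H]; destruct (sol_fwd _ _ _ _ _ _ hq hk hs H) as (_ & Hd & _); exact Hd. }
    destruct (zeta_root q kappa sigma mu theta hk hs (Rlt_le _ _ Hd)) as [_ HX1].
    destruct (zetahat_root q kappa sigma mu theta hk hs (Rlt_le _ _ Hd)) as [_ HX2].
    rewrite Heq in HX1. pose proof (sqrt_lt_R0 _ Hd). lra. }
  split. { apply iii_ze; auto. }
  split. { apply iii_zeh; auto. }
  split.
  { intros H1 H2. destruct (iii_ze _ _ _ _ _ hq hk hs H1) as [_ A1].
    destruct (iii_zeh _ _ _ _ _ hq hk hs H2) as [B1 B2].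
    pose proof (v_ze _ _ _ _ _ hk hs (proj1 (iii_ze _ _ _ _ _ hq hk hs H1))).
    pose proof (v_zeh _ _ _ _ _ hk hs B1). lra. }
  split. { intros z0 H1 H2 H3 H4. apply part_iv; auto. }
  split. { intros H. pose proof (v_ze _ _ _ _ _ hk hs H). lra. }
  split. { intros H. pose proof (v_zeh _ _ _ _ _ hk hs H). lra. }
  split. { apply vi_a; auto. }
  split. { apply vi_b; auto. }
  apply vii; auto.
Qed.
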